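(* Let $\mathcal U\subseteq\mathbb R^m$ be nonempty with $\underline{\dim}_{\mathrm{MB}}(\mathcal U)<n$, where $n\le m$. Then $\ker(\mathbf A)\cap(\mathcal U\setminus\{\mathbf 0\})=\emptyset$ for $\lambda^{n\times m}$-almost all $\mathbf A\in\mathbb R^{n\times m}$.
   Context: For nonempty $\mathcal{U}\subseteq\mathbb{R}^m$ and $\rho>0$, $N_{\mathcal U}(\rho)$ denotes the smallest number of open Euclidean balls of radius $\rho$ covering $\mathcal U$ ($=\infty$ if no finite cover exists). The lower Minkowski dimension is $\underline{\dim}_{\mathrm B}(\mathcal U)=\liminf_{\rho\to0}\frac{\log N_{\mathcal U}(\rho)}{\log(1/\rho)}$. The lower modified Minkowski dimension is $\underline{\dim}_{\mathrm{MB}}(\mathcal U)=\inf\{\sup_{i\in\mathbb N}\underline{\dim}_{\mathrm B}(\mathcal U_i):\mathcal U\subseteq\bigcup_{i\in\mathbb N}\mathcal U_i\}$, the infimum taken over all countable covers of $\mathcal U$ by nonempty bounded sets $\mathcal U_i$. $\lambda^{n\times m}$ is Lebesgue measure on $\mathbb R^{n\times m}$. *)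

(* Defs.v *)
From Stdlib Require Import Reals.
Open Scope R_scope.

(** Points of R^m are represented as functions [nat -> R] that vanish at
    indices >= m; n x m matrices as [nat -> nat -> R], only entries
    (i,j) with i < n, j < m being relevant. *)
Definition vec := nat -> R.
Definition in_Rm (m : nat) (x : vec) : Prop := forall i, (m <= i)%nat -> x i = 0.

Fixpoint sumR (k : nat) (f : nat -> R) : R :=
  match k with O => 0 | S k' => sumR k' f + f k' end.
Fixpoint prodR (k : nat) (f : nat -> R) : R :=
  match k with O => 1 | S k' => prodR k' f * f k' end.

Definition norm (m : nat) (x : vec) : R := sqrt (sumR m (fun i => x i * x i)).
Definition dist (m : nat) (x y : vec) : R := norm m (fun i => x i - y i).

Definition covered_by_balls (m : nat) (U : vec -> Prop) (rho : R) (k : nat) : Prop :=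
  exists c : nat -> vec,
    (forall i, in_Rm m (c i)) /\
    forall x, U x -> exists i, (i < k)%nat /\ dist m x (c i) < rho.

(** [lower_box_dim_le m U s] :  lower Minkowski dimension of U is <= s, i.e.
    liminf_{rho -> 0} log N_U(rho) / log(1/rho) <= s, unfolded:
    for all eps, delta > 0 there is rho in (0,delta) with
    log N_U(rho)/log(1/rho) < s + eps  (where N_U(rho) = min k with a cover
    by k balls; N_U(rho) = infinity makes the quotient +infinity). *)
Definition lower_box_dim_le (m : nat) (U : vec -> Prop) (s : R) : Prop :=
  forall eps delta, 0 < eps -> 0 < delta ->
    exists rho, 0 < rho < delta /\
      exists k, covered_by_balls m U rho k /\
        (forall k', covered_by_balls m U rho k' -> (k <= k')%nat) /\
        ln (INR k) / ln (1 / rho) < s + eps.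

Definition bounded_set (m : nat) (V : vec -> Prop) : Prop :=
  exists B, forall x, V x -> norm m x <= B.

(** [lower_MB_dim_lt m U t] : the lower modified Minkowski dimension of U is < t,
    i.e. inf over countable covers (U_i) of U by nonempty bounded subsets of R^m
    of sup_i lower_box_dim(U_i) is < t; equivalently there is such a cover and
    some s < t bounding all lower_box_dim(U_i). *)
Definition lower_MB_dim_lt (m : nat) (U : vec -> Prop) (t : R) : Prop :=
  exists (Ui : nat -> vec -> Prop) (s : R),
    s < t /\
    (forall i x, Ui i x -> in_Rm m x) /\
    (forall i, exists x, Ui i x) /\
    (forall i, bounded_set m (Ui i)) /\
    (forall x, U x -> exists i, Ui i x) /\
    (forall i, lower_box_dim_le m (Ui i) s).

Definition mat := nat -> nat -> R.
Definition box_vol (n m : nat) (a b : mat) : R :=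
  prodR n (fun i => prodR m (fun j => b i j - a i j)).
Definition in_box (n m : nat) (a b : mat) (A : mat) : Prop :=
  forall i j, (i < n)%nat -> (j < m)%nat -> a i j <= A i j <= b i j.
Definition lebesgue_null (n m : nat) (S : mat -> Prop) : Prop :=
  forall eps, 0 < eps ->
    exists a b : nat -> mat,
      (forall k i j, (i < n)%nat -> (j < m)%nat -> a k i j <= b k i j) /\
      (forall N, sumR N (fun k => box_vol n m (a k) (b k)) <= eps) /\
      (forall A, S A -> exists k, in_box n m (a k) (b k) A).

Definition ae_mat (n m : nat) (P : mat -> Prop) : Prop :=
  lebesgue_null n m (fun A => ~ P A).

Definition in_kernel (n m : nat) (A : mat) (x : vec) : Prop :=
  forall i, (i < n)%nat -> sumR m (fun j => A i j * x j) = 0.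

(* Main.v *)
Require Import Defs.
From Stdlib Require Import Reals Lra Lia List ZArith Classical ClassicalEpsilon.
Import ListNotations.
Open Scope R_scope.

Lemma sumR_ext : forall k f g, (forall i, (i < k)%nat -> f i = g i) -> sumR k f = sumR k g.
Proof. induction k; intros f g H; simpl; auto. rewrite (IHk f g) by (intros; apply H; lia). rewrite H by lia; auto. Qed.

Lemma sumR_le : forall k f g, (forall i, (i < k)%nat -> f i <= g i) -> sumR k f <= sumR k g.
Proof. induction k; intros f g H; simpl; [lra|]. pose proof (IHk f g ltac:(intros; apply H; lia)). pose proof (H k ltac:(lia)). lra. Qed.

Lemma sumR_plus : forall k f g, sumR k (fun i => f i + g i) = sumR k f + sumR k g.
Proof. induction k; intros; simpl; [lra|]. rewrite IHk. lra. Qed.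

Lemma sumR_minus : forall k f g, sumR k (fun i => f i - g i) = sumR k f - sumR k g.
Proof. induction k; intros; simpl; [lra|]. rewrite IHk. lra. Qed.

Lemma sumR_const : forall k c, sumR k (fun _ => c) = INR k * c.
Proof. induction k; intros; simpl sumR; [simpl; lra|]. rewrite IHk, S_INR. lra. Qed.

Lemma sumR_abs : forall k f, Rabs (sumR k f) <= sumR k (fun i => Rabs (f i)).
Proof. induction k; intros; simpl. rewrite Rabs_R0; lra.
  eapply Rle_trans; [apply Rabs_triang|]. pose proof (IHk f). lra. Qed.

Lemma sumR_nonneg : forall k f, (forall i, (i<k)%nat -> 0 <= f i) -> 0 <= sumR k f.
Proof. intros. replace 0 with (sumR k (fun _ => 0)). apply sumR_le; auto.
  rewrite sumR_const; lra. Qed.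

Lemma sumR_single : forall k l0 v, (l0 < k)%nat ->
  sumR k (fun l => if Nat.eqb l l0 then v else 0) = v.
Proof. induction k; intros l0 v H; [lia|]. simpl. destruct (Nat.eqb k l0) eqn:E.
  - apply Nat.eqb_eq in E; subst. replace (sumR l0 _) with (sumR l0 (fun _ => 0)).
    rewrite sumR_const; lra. apply sumR_ext; intros. destruct (Nat.eqb_spec i l0); auto; lia.
  - apply Nat.eqb_neq in E. rewrite IHk by lia. lra. Qed.

Lemma sumR_shift : forall k f, sumR (S k) f = f O + sumR k (fun i => f (S i)).
Proof. induction k; intros; simpl in *. lra. rewrite IHk. simpl. lra. Qed.

Lemma term_le_sumR : forall k f l, (forall i, (i<k)%nat -> 0 <= f i) -> (l < k)%nat -> f l <= sumR k f.
Proof. induction k; intros f l H Hl; [lia|]. simpl. destruct (Nat.eq_dec l k).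
  - subst. pose proof (sumR_nonneg k f ltac:(intros; apply H; lia)). lra.
  - pose proof (IHk f l ltac:(intros; apply H; lia) ltac:(lia)). pose proof (H k ltac:(lia)). lra. Qed.

Lemma prodR_nonneg : forall k f, (forall i, (i<k)%nat -> 0 <= f i) -> 0 <= prodR k f.
Proof. induction k; intros; simpl; [lra|]. apply Rmult_le_pos; [apply IHk; intros; apply H; lia | apply H; lia]. Qed.

Lemma prodR_le : forall k f g, (forall i, (i<k)%nat -> 0 <= f i <= g i) -> prodR k f <= prodR k g.
Proof. induction k; intros; simpl; [lra|]. apply Rmult_le_compat.
  apply prodR_nonneg; intros; apply H; lia. apply H; lia. apply IHk; intros; apply H; lia. apply H; lia. Qed.

Lemma prodR_const : forall k c, prodR k (fun _ => c) = c ^ k.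
Proof. induction k; intros; simpl; auto. rewrite IHk. ring. Qed.

Lemma prodR_ext : forall k f g, (forall i, (i < k)%nat -> f i = g i) -> prodR k f = prodR k g.
Proof. induction k; intros f g H; simpl; auto. rewrite (IHk f g) by (intros; apply H; lia). rewrite H by lia; auto. Qed.

Lemma prodR_onespecial : forall k j h w, (j < k)%nat ->
  prodR k (fun l => if Nat.eqb l j then w else h) = h ^ (k - 1) * w.
Proof. induction k; intros j h w H; [lia|]. simpl prodR. destruct (Nat.eq_dec j k).
  - subst. rewrite Nat.eqb_refl. rewrite (prodR_ext k _ (fun _ => h)).
    rewrite prodR_const. replace (S k - 1)%nat with k by lia. ring.
    intros. destruct (Nat.eqb_spec i k); auto; lia.
  - rewrite IHk by lia. destruct (Nat.eqb_spec k j); [lia|].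
    replace (S k - 1)%nat with (S (k-1)) by lia. simpl. ring. Qed.

Lemma coord_le_norm : forall m x l, (l < m)%nat -> Rabs (x l) <= norm m x.
Proof. intros. unfold norm. rewrite <- sqrt_Rsqr_abs. apply sqrt_le_1_alt.
  unfold Rsqr.
  apply (term_le_sumR m (fun i => x i * x i)); auto. intros; apply Rle_0_sqr. Qed.

Definition box := (mat * mat)%type.
Definition vol n m (b:box) := box_vol n m (fst b) (snd b).
Fixpoint listvol n m (l : list box) : R :=
  match l with [] => 0 | b::l' => vol n m b + listvol n m l' end.
Definition validb n m (b:box) := forall i j, (i<n)%nat -> (j<m)%nat -> fst b i j <= snd b i j.
Definition nullL n m (S : mat -> Prop) := forall eps, 0 < eps -> exists L,
  (forall b, In b L -> validb n m b) /\ listvol n m L <= eps /\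
  forall A, S A -> exists b, In b L /\ in_box n m (fst b) (snd b) A.

Lemma vol_nonneg n m b : validb n m b -> 0 <= vol n m b.
Proof. intros H. unfold vol, box_vol. apply prodR_nonneg; intros. apply prodR_nonneg; intros.
  pose proof (H i i0 H0 H1). lra. Qed.

Lemma listvol_app n m l1 l2 : listvol n m (l1 ++ l2) = listvol n m l1 + listvol n m l2.
Proof. induction l1; simpl; [lra|]. rewrite IHl1; lra. Qed.

Lemma listvol_nonneg n m l : (forall b, In b l -> validb n m b) -> 0 <= listvol n m l.
Proof. induction l; simpl; intros; [lra|]. pose proof (vol_nonneg n m a (H a (or_introl eq_refl))).
  pose proof (IHl ltac:(auto)). lra. Qed.

Lemma listvol_flat_map_le n m {T} (F : T -> list box) (l : list T) B :
  (forall t, listvol n m (F t) <= B) -> listvol n m (flat_map F l) <= INR (length l) * B.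
Proof. intros H. induction l; simpl flat_map; simpl length. simpl; lra.
  rewrite listvol_app, S_INR. pose proof (H a). lra. Qed.

Lemma nullL_mono n m (S T : mat -> Prop) : (forall A, S A -> T A) -> nullL n m T -> nullL n m S.
Proof. intros H HT eps He. destruct (HT eps He) as [L [H1 [H2 H3]]]. exists L; eauto. Qed.

Lemma nullL_union2 n m S T : nullL n m S -> nullL n m T -> nullL n m (fun A => S A \/ T A).
Proof. intros HS HT eps He. destruct (HS (eps/2) ltac:(lra)) as [L1 [A1 [B1 C1]]].
  destruct (HT (eps/2) ltac:(lra)) as [L2 [A2 [B2 C2]]]. exists (L1 ++ L2). split; [|split].
  - intros b Hb; apply in_app_or in Hb; destruct Hb; auto.
  - rewrite listvol_app; lra.
  - intros A [HA|HA]; [destruct (C1 A HA) as [b [? ?]] | destruct (C2 A HA) as [b [? ?]]];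
      exists b; split; auto; apply in_or_app; auto. Qed.

Lemma nullL_finite n m (S : nat -> mat -> Prop) N :
  (forall k, (k < N)%nat -> nullL n m (S k)) -> nullL n m (fun A => exists k, (k < N)%nat /\ S k A).
Proof. induction N; intros H.
  - intros eps He. exists []. split; [simpl; tauto|split; [simpl; lra|]]. intros A [k [Hk _]]; lia.
  - apply (nullL_mono n m _ (fun A => (exists k, (k < N)%nat /\ S k A) \/ S N A)).
    + intros A [k [Hk HA]]. destruct (Nat.eq_dec k N); [subst; auto|]. left; exists k; split; auto; lia.
    + apply nullL_union2; auto. Qed.

Definition zbox : box := (fun _ _ => 0, fun _ _ => 0).
Lemma vol_zbox n m : (1 <= n)%nat -> (1 <= m)%nat -> vol n m zbox = 0.
Proof. intros. unfold vol, box_vol, zbox; simpl. destruct n; [lia|]. simpl.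
  destruct m; [lia|]. simpl. ring. Qed.

Lemma sumR_nth_le n m l M : vol n m zbox = 0 -> (forall b, In b l -> validb n m b) ->
  sumR M (fun N => vol n m (nth N l zbox)) <= listvol n m l.
Proof. intros Hz. revert M. induction l; intros M Hv.
  - simpl. replace (sumR M _) with (sumR M (fun _ => 0)). rewrite sumR_const; lra.
    apply sumR_ext; intros; destruct i; auto.
  - destruct M. simpl. pose proof (listvol_nonneg n m (a::l) Hv). simpl in H; lra.
    rewrite sumR_shift. simpl. pose proof (IHl M ltac:(intros; apply Hv; right; auto)). lra. Qed.

Lemma sum_geom eps M : sumR M (fun k => eps / 2 ^ (S k)) = eps - eps / 2 ^ M.
Proof. induction M. simpl. field. change (sumR (S M) (fun k => eps / 2 ^ S k)) with (sumR M (fun k => eps / 2 ^ S k) + eps / 2 ^ S M). rewrite IHM. simpl. field.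
  apply pow_nonzero; lra. Qed.

Lemma union_null n m (Sf : nat -> mat -> Prop) : (1 <= n)%nat -> (1 <= m)%nat ->
  (forall k, nullL n m (Sf k)) -> lebesgue_null n m (fun A => exists k, Sf k A).
Proof.
  intros Hn Hm HS eps He.
  assert (Hk : forall k, exists L, (forall b, In b L -> validb n m b) /\ listvol n m L <= eps / 2 ^ (S k) /\
     forall A, Sf k A -> exists b, In b L /\ in_box n m (fst b) (snd b) A).
  { intros k. apply HS. apply Rdiv_lt_0_compat; auto. apply pow_lt; lra. }
  set (L := fun k => zbox :: proj1_sig (constructive_indefinite_description _ (Hk k))).
  assert (HL : forall k, (forall b, In b (L k) -> validb n m b) /\ listvol n m (L k) <= eps / 2 ^ (S k) /\
     forall A, Sf k A -> exists b, In b (L k) /\ in_box n m (fst b) (snd b) A).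
  { intros k. unfold L. destruct (constructive_indefinite_description _ (Hk k)) as [l [H1 [H2 H3]]]; simpl.
    split; [|split].
    - intros b [<-|Hb]; auto. intros i j _ _; simpl; lra.
    - rewrite vol_zbox by auto. simpl in *. lra.
    - intros A HA. destruct (H3 A HA) as [b [? ?]]; exists b; split; [right|]; auto. }
  assert (Llen : forall k, (1 <= length (L k))%nat) by (intros; unfold L; simpl; lia).
  set (C := fun M => concat (map L (seq 0 M))).
  assert (Clen : forall M, (M <= length (C M))%nat).
  { induction M; [simpl; lia|]. unfold C in *. rewrite seq_S, map_app, concat_app, length_app.
    simpl. simpl. rewrite app_nil_r. pose proof (Llen M). lia. }
  assert (Cpre : forall M1 M2, (M1 <= M2)%nat -> exists r, C M2 = C M1 ++ r).
  { intros. unfold C. replace M2 with (M1 + (M2 - M1))%nat by lia. rewrite seq_app, map_app, concat_app.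
    eexists; eauto. }
  assert (Cnth : forall M1 M2 N, (M1 <= M2)%nat -> (N < length (C M1))%nat -> nth N (C M1) zbox = nth N (C M2) zbox).
  { intros. destruct (Cpre M1 M2 H) as [r ->]. rewrite app_nth1; auto. }
  assert (Cvalid : forall M b, In b (C M) -> validb n m b).
  { intros M b Hb. unfold C in Hb. apply in_concat in Hb. destruct Hb as [l [Hl Hb]].
    apply in_map_iff in Hl. destruct Hl as [k [<- _]]. apply (HL k); auto. }
  assert (Cvol : forall M, listvol n m (C M) <= eps - eps / 2 ^ M).
  { induction M. unfold C; simpl. lra. unfold C in *. rewrite seq_S, map_app, concat_app, listvol_app.
    replace (concat (map L [0 + M]%nat)) with (L M) by (simpl; rewrite app_nil_r; reflexivity).
    pose proof (proj1 (proj2 (HL M))) as H.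
    assert (eps / 2 ^ S M + eps / 2 ^ S M = eps / 2 ^ M). { simpl. field. apply pow_nonzero; lra. }
    assert (eps / 2 ^ S M = eps / (2 * 2 ^ M)) by reflexivity. lra. }
  assert (zv : validb n m zbox) by (intros i j _ _; simpl; lra).
  exists (fun N => fst (nth N (C (S N)) zbox)), (fun N => snd (nth N (C (S N)) zbox)).
  split; [|split].
  - intros k i j Hi Hj. assert (Hv : validb n m (nth k (C (S k)) zbox)).
    { destruct (Nat.lt_ge_cases k (length (C (S k)))).
      apply (Cvalid (S k)), nth_In; auto. rewrite nth_overflow; auto. }
    apply Hv; auto.
  - intros M. replace (sumR M _) with (sumR M (fun N => vol n m (nth N (C M) zbox))).
    + eapply Rle_trans. apply sumR_nth_le. apply vol_zbox; auto. apply Cvalid.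
      pose proof (Cvol M). assert (0 < eps / 2 ^ M) by (apply Rdiv_lt_0_compat; auto; apply pow_lt; lra). lra.
    + apply sumR_ext. intros N HN. unfold vol. rewrite (Cnth (S N) M N); auto; pose proof (Clen (S N)); lia.
  - intros A [k HA]. destruct (proj2 (proj2 (HL k)) A HA) as [b [Hb Hin]].
    assert (Hb' : In b (C (S k))). { unfold C. rewrite seq_S, map_app, concat_app. apply in_or_app. right.
      simpl. rewrite app_nil_r. auto. }
    destruct (In_nth _ _ zbox Hb') as [N [HN Heq]]. exists N.
    rewrite (Cnth (S N) (S N + S k)%nat N) by (try lia; pose proof (Clen (S N)); lia).
    rewrite <- (Cnth (S k) (S N + S k)%nat N) by (auto; lia). rewrite Heq. auto.
Qed.

Lemma abs_le_inv x e : Rabs x <= e -> -e <= x <= e.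
Proof. unfold Rabs; destruct (Rcase_abs x); lra. Qed.
Lemma abs_le_intro x e : -e <= x <= e -> Rabs x <= e.
Proof. unfold Rabs; destruct (Rcase_abs x); lra. Qed.

Definition upd (M:mat) i l v : mat := fun i' l' => if andb (Nat.eqb i' i) (Nat.eqb l' l) then v else M i' l'.
Definition updv (y:nat->R) i v := fun i' => if Nat.eqb i' i then v else y i'.
Definition mem (p : nat*nat) (es : list (nat*nat)) : bool :=
  existsb (fun q => andb (Nat.eqb (fst q) (fst p)) (Nat.eqb (snd q) (snd p))) es.

Lemma mem_In p es : mem p es = true <-> In p es.
Proof. unfold mem. rewrite existsb_exists. split.
  - intros [q [Hq Hb]]. apply andb_prop in Hb. destruct Hb as [H1 H2].
    apply Nat.eqb_eq in H1; apply Nat.eqb_eq in H2. destruct p, q; simpl in *; subst; auto.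
  - intros H. exists p. split; auto. rewrite !Nat.eqb_refl; auto. Qed.

Lemma mem_notIn p es : ~ In p es -> mem p es = false.
Proof. intros H. destruct (mem p es) eqn:E; auto. apply mem_In in E; tauto. Qed.

Fixpoint cov (j : nat) (c : vec) (Rb h K : R) (G : nat) (es : list (nat*nat)) (lo hi : mat) (y : nat -> R) (E : R) : list box :=
  match es with
  | [] => [ (fun i l => if Nat.eqb l j then y i / c j - E / Rabs (c j) else lo i l,
             fun i l => if Nat.eqb l j then y i / c j + E / Rabs (c j) else hi i l) ]
  | (i0,l0) :: es' => flat_map (fun g =>
        cov j c Rb h K G es' (upd lo i0 l0 (-Rb + INR g * h)) (upd hi i0 l0 (-Rb + INR (S g) * h))
            (updv y i0 (y i0 - (-Rb + INR g * h) * c l0)) (E + h * K)) (seq 0 G)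
  end.

Definition rowsum m j (c : vec) es (A : mat) i :=
  sumR m (fun l => if Nat.eqb l j then A i l * c l else if mem (i,l) es then A i l * c l else 0).

Lemma rowsum_step m j c i0 l0 es' A i : (l0 < m)%nat -> l0 <> j -> ~ In (i0,l0) es' ->
  rowsum m j c ((i0,l0)::es') A i = rowsum m j c es' A i + (if Nat.eqb i i0 then A i0 l0 * c l0 else 0).
Proof. intros Hl Hj Hn. unfold rowsum.
  rewrite <- (sumR_single m l0 (if Nat.eqb i i0 then A i0 l0 * c l0 else 0)) by auto.
  rewrite <- sumR_plus. apply sumR_ext. intros l Hl'.
  unfold mem at 1. simpl existsb. fold (mem (i,l) es').
  destruct (Nat.eqb_spec l j); destruct (Nat.eqb_spec l l0); try lia; try lra.
  - subst. destruct (Nat.eqb_spec i i0); subst; simpl; rewrite ?Nat.eqb_refl; simpl.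
    + rewrite mem_notIn by auto. lra.
    + destruct (Nat.eqb_spec i0 i); [lia|]. simpl. unfold mem; simpl; destruct (existsb _ es'); lra.
  - destruct (Nat.eqb_spec i0 i); destruct (Nat.eqb_spec l0 l); try lia; simpl; unfold mem; simpl; destruct (existsb _ es'); lra.
Qed.

Lemma cov_cover n m j c Rb h K G :
  (j < m)%nat -> c j <> 0 -> (forall l, (l < m)%nat -> Rabs (c l) <= K) ->
  (forall a, -Rb <= a <= Rb -> exists g, (g < G)%nat /\ -Rb + INR g * h <= a <= -Rb + INR (S g) * h) ->
  forall es lo hi y E A, NoDup es ->
  (forall p, In p es -> (fst p < n)%nat /\ (snd p < m)%nat /\ snd p <> j) ->
  (forall i l, (i<n)%nat -> (l<m)%nat -> Rabs (A i l) <= Rb) ->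
  (forall i, (i<n)%nat -> Rabs (rowsum m j c es A i - y i) <= E) ->
  (forall i l, (i<n)%nat -> (l<m)%nat -> l<>j -> ~ In (i,l) es -> lo i l <= A i l <= hi i l) ->
  exists b, In b (cov j c Rb h K G es lo hi y E) /\ in_box n m (fst b) (snd b) A.
Proof.
  intros Hj Hc HK Hgrid es. induction es as [|[i0 l0] es' IH]; intros lo hi y E A Hnd Hes HA Hrow Hproc.
  - eexists; split; [left; reflexivity|]. intros i l Hi Hl. simpl.
    destruct (Nat.eqb_spec l j).
    + subst. pose proof (Hrow i Hi) as Hr. unfold rowsum in Hr.
      rewrite (sumR_ext m _ (fun l => if Nat.eqb l j then A i j * c j else 0)) in Hr.
      2:{ intros l _. destruct (Nat.eqb_spec l j); subst; auto. }
      rewrite sumR_single in Hr by auto.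
      assert (Hca : 0 < Rabs (c j)) by (apply Rabs_pos_lt; auto).
      assert (Heq : A i j - y i / c j = (A i j * c j - y i) / c j) by (field; auto).
      assert (Rabs (A i j - y i / c j) <= E / Rabs (c j)).
      { rewrite Heq. unfold Rdiv. rewrite Rabs_mult, Rabs_inv. apply Rmult_le_compat_r; auto.
        left; apply Rinv_0_lt_compat; auto. }
      apply abs_le_inv in H. lra.
    + apply Hproc; auto.
  - inversion Hnd as [|? ? Hnin Hnd']; subst.
    destruct (Hes (i0,l0) (or_introl eq_refl)) as [Hi0 [Hl0 Hj0]]; simpl in Hi0, Hl0, Hj0.
    destruct (Hgrid (A i0 l0) (abs_le_inv _ _ (HA i0 l0 Hi0 Hl0))) as [g [Hg Hgb]].
    assert (Hgb' : -Rb + INR g * h <= A i0 l0 <= -Rb + INR g * h + h).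
    { rewrite S_INR, Rmult_plus_distr_r, Rmult_1_l in Hgb. lra. }
    set (t := -Rb + INR g * h).
    destruct (IH (upd lo i0 l0 t) (upd hi i0 l0 (-Rb + INR (S g) * h))
                 (updv y i0 (y i0 - t * c l0)) (E + h * K) A Hnd') as [b [Hb Hin]]; auto.
    + intros p Hp; apply Hes; right; auto.
    + intros i Hi. pose proof (Hrow i Hi) as Hr. rewrite rowsum_step in Hr by auto.
      unfold updv. destruct (Nat.eqb_spec i i0).
      * subst. assert (Rabs ((A i0 l0 - t) * c l0) <= h * K).
        { rewrite Rabs_mult. apply Rmult_le_compat; try apply Rabs_pos. apply abs_le_intro.
          unfold t. lra. apply HK; auto. }
        replace (rowsum m j c es' A i0 - (y i0 - t * c l0)) with
          ((rowsum m j c es' A i0 + A i0 l0 * c l0 - y i0) - (A i0 l0 - t) * c l0) by ring.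
        eapply Rle_trans; [apply Rabs_triang|]. rewrite Rabs_Ropp. lra.
      * pose proof (Rmult_le_pos h K). assert (0 <= h). { lra. }
        assert (0 <= K). { eapply Rle_trans; [apply Rabs_pos|apply (HK l0 Hl0)]. }
        replace (rowsum m j c es' A i + 0 - y i) with (rowsum m j c es' A i - y i) in Hr by ring.
        pose proof (Rmult_le_pos h K H0 H1). lra.
    + intros i l Hi Hl Hlj Hn. unfold upd.
      destruct (Nat.eqb_spec i i0); destruct (Nat.eqb_spec l l0); cbn [andb].
      * subst. unfold t. lra.
      * apply Hproc; auto. intros [E'|E']; [inversion E'; lia| tauto].
      * apply Hproc; auto. intros [E'|E']; [inversion E'; lia| tauto].
      * apply Hproc; auto. intros [E'|E']; [inversion E'; lia| tauto].
    + exists b; split; auto. simpl. apply in_flat_map. exists g. split; auto. apply in_seq; lia.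
Qed.

Definition covbound n m j (c : vec) h K G (len : nat) E :=
  INR G ^ len * (h ^ (m - 1) * (2 * (E + INR len * h * K) / Rabs (c j))) ^ n.

Lemma cov_vol n m j c Rb h K G : (j < m)%nat -> c j <> 0 -> 0 < h -> 0 <= K ->
  forall es lo hi y E, 0 <= E ->
  (forall p, In p es -> (fst p < n)%nat /\ (snd p < m)%nat /\ snd p <> j) ->
  (forall i l, (i<n)%nat -> (l<m)%nat -> l<>j -> ~ In (i,l) es -> 0 <= hi i l - lo i l <= h) ->
  (forall b, In b (cov j c Rb h K G es lo hi y E) -> validb n m b) /\
  listvol n m (cov j c Rb h K G es lo hi y E) <= covbound n m j c h K G (length es) E.
Proof.
  intros Hj Hc Hh HK es. assert (Hca : 0 < Rabs (c j)) by (apply Rabs_pos_lt; auto).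
  induction es as [|[i0 l0] es' IH]; intros lo hi y E HE Hes Hp.
  - assert (HEc : 0 <= E / Rabs (c j)) by (unfold Rdiv; apply Rmult_le_pos; [auto | left; apply Rinv_0_lt_compat; auto]).
    split.
    + intros b [<-|[]]. intros i l Hi Hl. simpl. destruct (Nat.eqb_spec l j). lra.
      pose proof (Hp i l Hi Hl n0 (fun x => x)). lra.
    + simpl listvol. unfold vol, box_vol, covbound. simpl fst; simpl snd. simpl length.
      rewrite Rplus_0_r. change (INR G ^ 0) with 1. rewrite Rmult_1_l, <- (prodR_const n). apply prodR_le. intros i Hi. split.
      * apply prodR_nonneg. intros l Hl. destruct (Nat.eqb_spec l j). lra.
        pose proof (Hp i l Hi Hl n0 (fun x => x)). lra.
      * rewrite Rmult_0_l, Rmult_0_l, Rplus_0_r.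
        rewrite <- (prodR_onespecial m j h) by auto. apply prodR_le. intros l Hl.
        destruct (Nat.eqb_spec l j).
        -- split. lra. right; field; split; auto; intro Habs; lra.
        -- apply (Hp i l Hi Hl n0 (fun x => x)).
  - destruct (Hes (i0,l0) (or_introl eq_refl)) as [Hi0 [Hl0 Hj0]]; simpl in Hi0, Hl0, Hj0.
    assert (Hstep : forall g, (forall b, In b (cov j c Rb h K G es' (upd lo i0 l0 (-Rb + INR g * h)) (upd hi i0 l0 (-Rb + INR (S g) * h))
            (updv y i0 (y i0 - (-Rb + INR g * h) * c l0)) (E + h * K)) -> validb n m b) /\
        listvol n m (cov j c Rb h K G es' (upd lo i0 l0 (-Rb + INR g * h)) (upd hi i0 l0 (-Rb + INR (S g) * h))
            (updv y i0 (y i0 - (-Rb + INR g * h) * c l0)) (E + h * K)) <= covbound n m j c h K G (length es') (E + h * K)).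
    { intros g. apply IH.
      - pose proof (Rmult_le_pos h K ltac:(lra) HK). lra.
      - intros p Hp'; apply Hes; right; auto.
      - intros i l Hi Hl Hlj Hn. unfold upd. destruct (Nat.eqb_spec i i0); destruct (Nat.eqb_spec l l0); cbn [andb].
        + rewrite S_INR. lra.
        + apply Hp; auto. intros [E'|E']; [inversion E'; lia| tauto].
        + apply Hp; auto. intros [E'|E']; [inversion E'; lia| tauto].
        + apply Hp; auto. intros [E'|E']; [inversion E'; lia| tauto]. }
    split.
    + intros b Hb. simpl in Hb. apply in_flat_map in Hb. destruct Hb as [g [_ Hb]].
      apply (proj1 (Hstep g)); auto.
    + simpl cov. eapply Rle_trans. apply listvol_flat_map_le. intros g; apply (proj2 (Hstep g)).
      rewrite length_seq. unfold covbound. simpl length. rewrite S_INR. simpl pow at 2.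
      right. replace (E + h * K + INR (length es') * h * K) with (E + (INR (length es') + 1) * h * K) by ring.
      change (INR G ^ S (length es')) with (INR G * INR G ^ length es'). symmetry. apply Rmult_assoc.
Qed.

Definition lj (m j : nat) := filter (fun l => negb (Nat.eqb l j)) (seq 0 m).
Definition es0 (n m j : nat) := flat_map (fun i => map (fun l => (i,l)) (lj m j)) (seq 0 n).

Lemma lj_length m j : (j < m)%nat -> length (lj m j) = (m - 1)%nat.
Proof. induction m; intros H; [lia|]. unfold lj in *. rewrite seq_S, filter_app, length_app. simpl.
  destruct (Nat.eqb_spec m j).
  - subst. simpl. assert (length (filter (fun l => negb (l =? j)) (seq 0 j)) = j).
    { clear H IHm. rewrite forallb_filter_id. apply length_seq.
      apply forallb_forall. intros x Hx. apply in_seq in Hx. destruct (Nat.eqb_spec x j); auto; lia. }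
    lia.
  - simpl. rewrite IHm by lia. lia. Qed.

Lemma es0_length n m j : (j < m)%nat -> length (es0 n m j) = (n * (m - 1))%nat.
Proof. intros H. induction n. reflexivity. unfold es0 in *. rewrite seq_S, flat_map_app, length_app, IHn.
  simpl. rewrite app_nil_r, length_map, lj_length by auto. lia. Qed.

Lemma es0_In n m j i l : In (i,l) (es0 n m j) <-> (i < n)%nat /\ (l < m)%nat /\ l <> j.
Proof. unfold es0, lj. rewrite in_flat_map. split.
  - intros [x [Hx Hin]]. apply in_map_iff in Hin. destruct Hin as [l' [E Hl']]. inversion E; subst.
    apply filter_In in Hl'. destruct Hl' as [H1 H2]. apply in_seq in H1, Hx.
    destruct (Nat.eqb_spec l j); simpl in H2; try discriminate. lia.
  - intros [H1 [H2 H3]]. exists i. split. apply in_seq; lia. apply in_map_iff. exists l. split; auto.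
    apply filter_In. split. apply in_seq; lia. destruct (Nat.eqb_spec l j); auto. Qed.

Lemma map_pair_NoDup (i : nat) (l : list nat) : NoDup l -> NoDup (map (fun x => (i,x)) l).
Proof. induction 1; simpl; constructor; auto. intros Hin. apply in_map_iff in Hin.
  destruct Hin as [y [E Hy]]. inversion E; subst; auto. Qed.

Lemma es0_NoDup n m j : NoDup (es0 n m j).
Proof. induction n. constructor. unfold es0 in *. rewrite seq_S, flat_map_app. apply NoDup_app; auto.
  - simpl. rewrite app_nil_r. apply map_pair_NoDup. apply NoDup_filter, seq_NoDup.
  - intros [i l] H1 H2. fold (es0 n m j) in H1. apply es0_In in H1. simpl in H2. rewrite app_nil_r in H2.
    apply in_map_iff in H2. destruct H2 as [x [E _]]. inversion E; subst. lia. Qed.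

Lemma floor_ex t : 0 <= t -> exists g : nat, INR g <= t < INR g + 1.
Proof. intros Ht. destruct (archimed t) as [H1 H2].
  assert (Hz : (0 < up t)%Z). { apply lt_IZR. lra. }
  exists (Z.to_nat (up t - 1)). rewrite INR_IZR_INZ, Z2Nat.id by lia. rewrite minus_IZR. simpl. lra. Qed.

Lemma grid_ex Rb h : 0 < h -> 0 < Rb -> exists G : nat, INR G * h <= 2 * Rb + h /\
  forall a, -Rb <= a <= Rb -> exists g, (g < G)%nat /\ -Rb + INR g * h <= a <= -Rb + INR (S g) * h.
Proof. intros Hh HR. destruct (floor_ex (2 * Rb / h)) as [g0 [Hg1 Hg2]].
  { unfold Rdiv. apply Rmult_le_pos; [lra| left; apply Rinv_0_lt_compat; auto]. }
  exists (S g0). split.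
  - rewrite S_INR. apply (Rmult_le_compat_r h) in Hg1; [|lra]. unfold Rdiv in Hg1.
    rewrite Rmult_assoc, Rinv_l, Rmult_1_r in Hg1 by lra. lra.
  - intros a Ha. destruct (floor_ex ((a + Rb) / h)) as [g [H1 H2]].
    { unfold Rdiv. apply Rmult_le_pos; [lra| left; apply Rinv_0_lt_compat; auto]. }
    exists g. split.
    + apply INR_lt. rewrite S_INR. assert ((a + Rb) / h <= 2 * Rb / h).
      { unfold Rdiv. apply Rmult_le_compat_r. left; apply Rinv_0_lt_compat; auto. lra. } lra.
    + rewrite S_INR. apply (Rmult_le_compat_r h) in H1; [|lra]. apply (Rmult_lt_compat_r h) in H2; [|lra].
      unfold Rdiv in H1, H2. rewrite Rmult_assoc, Rinv_l, Rmult_1_r in H1, H2 by lra. lra. Qed.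

Lemma core n m j c Rb h K dl E0 : (j < m)%nat -> 0 < h -> 0 < Rb -> 0 <= K -> 0 < dl -> dl <= Rabs (c j) ->
  (forall l, (l < m)%nat -> Rabs (c l) <= K) -> 0 <= E0 ->
  exists L, (forall b, In b L -> validb n m b) /\
    listvol n m L <= (2 * Rb + h) ^ (n * (m - 1)) * (2 * (E0 + INR (n * (m - 1)) * h * K) / dl) ^ n /\
    forall A, (forall i l, (i<n)%nat -> (l<m)%nat -> Rabs (A i l) <= Rb) ->
      (forall i, (i<n)%nat -> Rabs (sumR m (fun l => A i l * c l)) <= E0) ->
      exists b, In b L /\ in_box n m (fst b) (snd b) A.
Proof.
  intros Hj Hh HR HK Hdl Hcj Hcl HE0.
  assert (Hc : c j <> 0). { intro e. rewrite e, Rabs_R0 in Hcj. lra. }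
  destruct (grid_ex Rb h Hh HR) as [G [HG Hgrid]].
  set (z := fun (_ _ : nat) => 0 : R).
  exists (cov j c Rb h K G (es0 n m j) z z (fun _ => 0) E0).
  destruct (cov_vol n m j c Rb h K G Hj Hc Hh HK (es0 n m j) z z (fun _ => 0) E0 HE0) as [Hv Hvol].
  { intros [i l] Hp. apply es0_In in Hp. simpl; auto. }
  { intros i l Hi Hl Hlj Hn. exfalso. apply Hn. apply es0_In; auto. }
  split; [auto|split].
  - eapply Rle_trans; [exact Hvol|]. unfold covbound. rewrite es0_length by auto.
    set (N := (n * (m - 1))%nat). set (X := 2 * (E0 + INR N * h * K)).
    assert (HX : 0 <= X). { unfold X. pose proof (pos_INR N). assert (0 <= INR N * h * K).
      apply Rmult_le_pos; [apply Rmult_le_pos|]; lra. lra. }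
    rewrite Rpow_mult_distr, <- pow_mult. replace ((m - 1) * n)%nat with N by (unfold N; lia).
    rewrite <- Rmult_assoc, <- Rpow_mult_distr.
    assert (0 <= INR G * h) by (apply Rmult_le_pos; [apply pos_INR|lra]).
    apply Rmult_le_compat.
    + apply pow_le; auto.
    + apply pow_le. unfold Rdiv. apply Rmult_le_pos; auto. left; apply Rinv_0_lt_compat; lra.
    + apply pow_incr; lra.
    + apply pow_incr. split. unfold Rdiv. apply Rmult_le_pos; auto. left; apply Rinv_0_lt_compat; lra.
      unfold Rdiv. apply Rmult_le_compat_l; auto. apply Rinv_le_contravar; auto.
  - intros A HA Hrow. apply (cov_cover n m j c Rb h K G Hj Hc Hcl Hgrid); auto.
    + apply es0_NoDup.
    + intros [i l] Hp. apply es0_In in Hp. simpl; auto.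
    + intros i Hi. unfold rowsum. rewrite Rminus_0_r.
      rewrite (sumR_ext m _ (fun l => A i l * c l)); auto.
      intros l Hl. destruct (Nat.eqb_spec l j); auto.
      rewrite (proj2 (mem_In _ _)); auto. apply es0_In; auto.
    + intros i l Hi Hl Hlj Hn. exfalso. apply Hn. apply es0_In; auto.
Qed.

Lemma count_bound (k : nat) (rho eps Cc e' s nn : R) :
  (1 <= k)%nat -> 0 < rho < 1 -> 0 < eps -> 0 < Cc -> 0 < e' -> nn - s = 2 * e' ->
  ln (INR k) / ln (1 / rho) < s + e' ->
  ln rho < ln (eps / Cc) / e' ->
  INR k * (Cc * Rpower rho nn) < eps.
Proof.
  intros Hk Hr He HC He' Hns Hln Hlr.
  assert (Hk' : 0 < INR k) by (apply lt_0_INR; lia).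
  assert (Hl1 : ln (1 / rho) = - ln rho) by (unfold Rdiv; rewrite Rmult_1_l, ln_Rinv; lra).
  assert (Hlr0 : ln rho < 0) by (rewrite <- ln_1; apply ln_increasing; lra).
  assert (H1 : ln (INR k) < (s + e') * (- ln rho)).
  { rewrite Hl1 in Hln. apply (Rmult_lt_compat_r (- ln rho)) in Hln; [|lra].
    unfold Rdiv in Hln. rewrite Rmult_assoc, Rinv_l, Rmult_1_r in Hln by lra. lra. }
  assert (H2 : e' * ln rho < ln (eps / Cc)).
  { apply (Rmult_lt_compat_l e') in Hlr; auto. unfold Rdiv in Hlr.
    replace (e' * (ln (eps * / Cc) * / e')) with (ln (eps * / Cc)) in Hlr by (field; lra). auto. }
  assert (H3 : ln (INR k * Rpower rho nn) < ln (eps / Cc)).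
  { rewrite ln_mult by (auto; apply exp_pos). unfold Rpower. rewrite ln_exp.
    assert (nn * ln rho = (s + 2 * e') * ln rho) by (f_equal; lra). nra. }
  apply ln_lt_inv in H3; [| apply Rmult_lt_0_compat; auto; apply exp_pos | apply Rdiv_lt_0_compat; auto].
  apply (Rmult_lt_compat_r Cc) in H3; auto. unfold Rdiv in H3. replace (eps * / Cc * Cc) with eps in H3 by (field; lra).
  replace (INR k * (Cc * Rpower rho nn)) with (INR k * Rpower rho nn * Cc) by ring. lra.
Qed.

Definition piece n m (V : vec -> Prop) j r : mat -> Prop := fun A =>
  (forall i l, (i<n)%nat -> (l<m)%nat -> Rabs (A i l) <= INR r) /\
  exists x, V x /\ 1 / (INR r + 1) <= Rabs (x j) /\ in_kernel n m A x.

Lemma piece_null n m (V : vec -> Prop) B s j r : (1 <= n)%nat -> (j < m)%nat ->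
  (forall x, V x -> norm m x <= B) -> (exists x, V x) -> lower_box_dim_le m V s -> s < INR n ->
  nullL n m (piece n m V j r).
Proof.
  intros Hn Hj HB [x0 Hx0] Hdim Hs eps He.
  set (d0 := 1 / (INR r + 1)).
  assert (Hd0 : 0 < d0) by (unfold d0; apply Rdiv_lt_0_compat; [lra| pose proof (pos_INR r); lra]).
  set (dl := d0 / 2). set (Rb := INR r + 1). set (K := Rabs B + 1). set (N := (n * (m - 1))%nat).
  assert (HRb : 0 < Rb) by (unfold Rb; pose proof (pos_INR r); lra).
  assert (HK : 0 < K) by (unfold K; pose proof (Rabs_pos B); lra).
  set (Y := 2 * (INR m * Rb + INR N * K) / dl).
  assert (HY : 0 < Y).
  { unfold Y. apply Rdiv_lt_0_compat; [|unfold dl; lra]. assert (0 < INR m) by (apply lt_0_INR; lia).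
    assert (0 <= INR N * K) by (apply Rmult_le_pos; [apply pos_INR|lra]).
    assert (0 < INR m * Rb) by (apply Rmult_lt_0_compat; auto). lra. }
  set (Cc := (2 * Rb + 1) ^ N * Y ^ n).
  assert (HCc : 0 < Cc) by (unfold Cc; apply Rmult_lt_0_compat; apply pow_lt; lra).
  set (e' := (INR n - s) / 2).
  assert (He' : 0 < e') by (unfold e'; lra).
  set (delta := Rmin (Rmin (d0 / 2) 1) (exp (ln (eps / Cc) / e'))).
  assert (Hdelta : 0 < delta).
  { unfold delta. apply Rmin_glb_lt. apply Rmin_glb_lt; lra. apply exp_pos. }
  destruct (Hdim e' delta He' Hdelta) as [rho [[Hr1 Hr2] [k [[cc [Hcin Hcov]] [_ Hln]]]]].
  assert (Hrd0 : rho <= d0 / 2) by (pose proof (Rmin_l (Rmin (d0/2) 1) (exp (ln (eps / Cc) / e'))); pose proof (Rmin_l (d0/2) 1); unfold delta in Hr2; lra).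
  assert (Hr1' : rho < 1) by (pose proof (Rmin_l (Rmin (d0/2) 1) (exp (ln (eps / Cc) / e'))); pose proof (Rmin_r (d0/2) 1); unfold delta in Hr2; lra).
  assert (Hr3 : rho < exp (ln (eps / Cc) / e')) by (pose proof (Rmin_r (Rmin (d0/2) 1) (exp (ln (eps / Cc) / e'))); unfold delta in Hr2; lra).
  set (E0 := INR m * Rb * rho).
  assert (HE0 : 0 <= E0) by (unfold E0; apply Rmult_le_pos; [apply Rmult_le_pos; [apply pos_INR|lra]|lra]).
  set (bound := (2 * Rb + rho) ^ N * (2 * (E0 + INR N * rho * K) / dl) ^ n).
  set (hyp := fun t => dl <= Rabs (cc t j) /\ forall l, (l < m)%nat -> Rabs (cc t l) <= K).
  set (Q := fun t L => (forall b, In b L -> validb n m b) /\ listvol n m L <= bound /\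
      (hyp t -> forall A, (forall i l, (i<n)%nat -> (l<m)%nat -> Rabs (A i l) <= Rb) ->
      (forall i, (i<n)%nat -> Rabs (sumR m (fun l => A i l * cc t l)) <= E0) ->
      exists b, In b L /\ in_box n m (fst b) (snd b) A)).
  assert (Hbound0 : 0 <= bound).
  { unfold bound. apply Rmult_le_pos; apply pow_le. lra. unfold Rdiv. apply Rmult_le_pos.
    assert (0 <= INR N * rho * K) by (apply Rmult_le_pos; [apply Rmult_le_pos; [apply pos_INR|lra]|lra]). lra.
    left; apply Rinv_0_lt_compat; unfold dl; lra. }
  assert (HQ : forall t, exists L, Q t L).
  { intros t. destruct (classic (hyp t)) as [[H1 H2]|Hn'].
    - destruct (core n m j (cc t) Rb rho K dl E0 Hj Hr1 HRb ltac:(lra) ltac:(unfold dl; lra) H1 H2 HE0)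
        as [L [HL1 [HL2 HL3]]]. exists L. unfold Q. split; [auto|split; [auto|intros _; auto]].
    - exists []. split; [simpl; tauto|]. split; [simpl; auto|]. intros; tauto. }
  set (F := fun t => proj1_sig (constructive_indefinite_description _ (HQ t))).
  assert (HF : forall t, Q t (F t)) by (intros t; unfold F; destruct (constructive_indefinite_description _ (HQ t)); auto).
  exists (flat_map F (seq 0 k)). split; [|split].
  - intros b Hb. apply in_flat_map in Hb. destruct Hb as [t [_ Hb]]. apply (proj1 (HF t)); auto.
  - eapply Rle_trans. apply listvol_flat_map_le. intros t. apply (proj1 (proj2 (HF t))).
    rewrite length_seq.
    assert (Hk : (1 <= k)%nat). { destruct (Hcov x0 Hx0) as [t [Ht _]]. lia. }
    assert (Hb : bound <= Cc * Rpower rho (INR n)).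
    { rewrite Rpower_pow by auto. unfold bound, Cc.
      replace (2 * (E0 + INR N * rho * K) / dl) with (rho * Y) by (unfold E0, Y; field; unfold dl; lra).
      rewrite Rpow_mult_distr. replace ((2 * Rb + 1) ^ N * Y ^ n * (rho ^ n)) with ((2 * Rb + 1) ^ N * (rho ^ n * Y ^ n)) by ring.
      apply Rmult_le_compat. apply pow_le; lra. apply Rmult_le_pos; apply pow_le; lra.
      apply pow_incr; lra. lra. }
    assert (INR k * (Cc * Rpower rho (INR n)) < eps).
    { apply (count_bound k rho eps Cc e' s (INR n)); auto. unfold e'; lra.
      apply ln_increasing in Hr3; auto. rewrite ln_exp in Hr3. auto. }
    assert (0 <= INR k) by apply pos_INR.
    pose proof (Rmult_le_compat_l (INR k) _ _ H0 Hb). lra.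
  - intros A [HA [x [Hx [Hxj Hker]]]]. destruct (Hcov x Hx) as [t [Ht Hdist]].
    assert (Hco : forall l, (l < m)%nat -> Rabs (x l - cc t l) < rho).
    { intros l Hl. eapply Rle_lt_trans; [|exact Hdist]. unfold dist.
      apply (coord_le_norm m (fun i => x i - cc t i) l Hl). }
    assert (Hxl : forall l, (l < m)%nat -> Rabs (x l) <= Rabs B).
    { intros l Hl. pose proof (coord_le_norm m x l Hl). pose proof (HB x Hx). pose proof (Rle_abs B). lra. }
    assert (Hhyp : hyp t).
    { split.
      - pose proof (Hco j Hj). pose proof (Rabs_triang (x j - cc t j) (cc t j)).
        replace (x j - cc t j + cc t j) with (x j) in H0 by ring. unfold dl. fold d0 in Hxj. lra.
      - intros l Hl. pose proof (Hco l Hl). pose proof (Hxl l Hl).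
        pose proof (Rabs_triang (cc t l - x l) (x l)). replace (cc t l - x l + x l) with (cc t l) in H1 by ring.
        rewrite Rabs_minus_sym in H1. unfold K. lra. }
    destruct (proj2 (proj2 (HF t)) Hhyp A) as [b [Hb Hin]].
    + intros i l Hi Hl. pose proof (HA i l Hi Hl). unfold Rb; lra.
    + intros i Hi. replace (sumR m (fun l => A i l * cc t l)) with
        (sumR m (fun l => A i l * cc t l - A i l * x l)).
      2:{ rewrite sumR_minus. rewrite (Hker i Hi). ring. }
      eapply Rle_trans; [apply sumR_abs|]. unfold E0. rewrite Rmult_assoc, <- sumR_const.
      apply sumR_le. intros l Hl. rewrite <- Rmult_minus_distr_l, Rabs_mult.
      apply Rmult_le_compat; try apply Rabs_pos. pose proof (HA i l Hi Hl); unfold Rb; lra.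
      rewrite Rabs_minus_sym. left; apply Hco; auto.
    + exists b. split; auto. apply in_flat_map. exists t. split; auto. apply in_seq; lia.
Qed.

Lemma leb_null_mono n m (S T : mat -> Prop) : (forall A, S A -> T A) -> lebesgue_null n m T -> lebesgue_null n m S.
Proof. intros H HT eps He. destruct (HT eps He) as [a [b [H1 [H2 H3]]]]. exists a, b. split; auto. Qed.

Lemma dim_nonneg m V s : (exists x, V x) -> lower_box_dim_le m V s -> 0 <= s.
Proof. intros [x0 Hx0] Hd. destruct (Rlt_le_dec s 0) as [Hs|Hs]; auto. exfalso.
  destruct (Hd (- s / 2) 1 ltac:(lra) ltac:(lra)) as [rho [[Hr1 Hr2] [k [[cc [_ Hcov]] [_ Hln]]]]].
  destruct (Hcov x0 Hx0) as [t [Ht _]].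
  assert (0 <= ln (INR k)). { destruct (Nat.eq_dec k 1). subst. simpl. rewrite ln_1; lra.
    left. rewrite <- ln_1. apply ln_increasing. lra. apply lt_1_INR. lia. }
  assert (0 < ln (1 / rho)). { rewrite <- ln_1. apply ln_increasing. lra.
    unfold Rdiv. rewrite Rmult_1_l. rewrite <- Rinv_1. apply Rinv_lt_contravar; lra. }
  assert (0 <= ln (INR k) / ln (1 / rho)). { unfold Rdiv. apply Rmult_le_pos; auto. left; apply Rinv_0_lt_compat; auto. }
  lra. Qed.

Theorem proposition1 (m n : nat) (U : vec -> Prop) :
  (forall x, U x -> in_Rm m x) ->
  (exists x, U x) ->
  (n <= m)%nat ->
  lower_MB_dim_lt m U (INR n) ->
  ae_mat n m (fun A =>
    ~ exists x, U x /\ (exists j, (j < m)%nat /\ x j <> 0) /\ in_kernel n m A x).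
Proof.
  intros HURm HUne Hnm [Ui [s [Hs [HUiRm [HUine [HUib [HUcov HUdim]]]]]]].
  destruct n as [|n'].
  { exfalso. pose proof (dim_nonneg m (Ui 0%nat) s (HUine 0%nat) (HUdim 0%nat)). simpl in Hs. lra. }
  set (n := S n'). assert (Hn : (1 <= n)%nat) by (unfold n; lia). assert (Hm : (1 <= m)%nat) by lia.
  unfold ae_mat.
  apply (leb_null_mono n m _ (fun A => exists r, (fun r A => exists i, (i < S r)%nat /\
            (exists j, (j < m)%nat /\ piece n m (Ui i) j r A)) r A)).
  2:{ apply union_null; auto. intros r. apply nullL_finite. intros i Hi.
      apply nullL_finite. intros j Hj. destruct (HUib i) as [B HB].
      apply (piece_null n m (Ui i) B s j r); auto. }
  intros A HA. apply NNPP in HA. destruct HA as [x [Hx [[j [Hj Hxj]] Hker]]].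
  destruct (HUcov x Hx) as [i Hi].
  set (mb := sumR n (fun i => sumR m (fun l => Rabs (A i l)))).
  assert (Hmb : forall i l, (i < n)%nat -> (l < m)%nat -> Rabs (A i l) <= mb).
  { intros i0 l Hi0 Hl. eapply Rle_trans; [|apply (term_le_sumR n (fun i => sumR m (fun l => Rabs (A i l))) i0)].
    apply (term_le_sumR m (fun l => Rabs (A i0 l)) l); auto. intros; apply Rabs_pos.
    intros; apply sumR_nonneg; intros; apply Rabs_pos. auto. }
  assert (Hmb0 : 0 <= mb) by (unfold mb; apply sumR_nonneg; intros; apply sumR_nonneg; intros; apply Rabs_pos).
  assert (Hax : 0 < Rabs (x j)) by (apply Rabs_pos_lt; auto).
  assert (Hinv : 0 < 1 / Rabs (x j)) by (apply Rdiv_lt_0_compat; lra).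
  destruct (floor_ex (1 / Rabs (x j) + mb)) as [g [_ Hg]]; [lra|].
  exists (g + 1 + i)%nat. exists i. split; [lia|]. exists j. split; auto. split.
  - intros i0 l Hi0 Hl. pose proof (Hmb i0 l Hi0 Hl). rewrite !plus_INR. simpl. pose proof (pos_INR i). lra.
  - exists x. split; auto. split; auto.
    assert (H1 : 1 / Rabs (x j) <= INR (g + 1 + i) + 1).
    { rewrite !plus_INR. simpl. pose proof (pos_INR i). lra. }
    apply Rinv_le_contravar in H1; auto. unfold Rdiv in *. rewrite Rmult_1_l in *. rewrite Rinv_inv in H1. auto.
Qed.
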